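(* Let $T \in \mathscr{B}(\mathscr{H})$ be an analytic left invertible operator with $\operatorname{ind}(T) = -n$ for a positive integer $n$, and let $\Omega_T := \{z \in \mathbb{C}: |z| < \|T^\dagger\|^{-1}\}$. Then $T^* \in B_n(\Omega_T)$.
   Context: For a left invertible $T$, $T^\dagger = (T^*T)^{-1}T^*$ is its Moore–Penrose inverse; $T$ is analytic if $\bigcap_{n\ge1}T^n\mathscr{H} = \{0\}$. For an open $\Omega \subset \mathbb{C}$ and positive integer $n$, the Cowen–Douglas class $B_n(\Omega)$ consists of $R \in \mathscr{B}(\mathscr{H})$ with: $\Omega \subset \sigma(R)$; $(R-\lambda)\mathscr{H} = \mathscr{H}$ for all $\lambda\in\Omega$; $\dim\ker(R-\lambda) = n$ for all $\lambda \in \Omega$; and the closed span of $\bigcup_{\lambda\in\Omega}\ker(R-\lambda)$ is $\mathscr{H}$. *)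

(* Defs.v *)
From mathcomp Require Import all_boot all_order all_algebra.
From mathcomp Require Import all_classical all_reals all_analysis.
From mathcomp Require Import complex.
Import Order.TTheory GRing.Theory Num.Theory.
Import numFieldNormedType.Exports.
Set Implicit Arguments. Unset Strict Implicit. Unset Printing Implicit Defensive.
Local Open Scope ring_scope.
Local Open Scope classical_set_scope.

Section HilbertDefs.
Variables (R : realType) (V : completeNormedModType R[i]).

(** [ip] is an inner product on V inducing its norm: linear in the first
    argument, conjugate symmetric, and <x,x> = ||x||^2.  Together with the
    completeness of V, this makes V a complex Hilbert space. *)
Definition is_inner_product (ip : V -> V -> R[i]) : Prop :=
  [/\ forall (a : R[i]) (x y z : V), ip (a *: x + y) z = a * ip x z + ip y z,
      forall x y : V, ip x y = (ip y x)^* &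
      forall x : V, ip x x = `|x| ^+ 2].

Definition bounded_op (T : V -> V) : Prop :=
  linear T /\ exists M : R[i], forall x, `|T x| <= M * `|x|.

Definition is_adjoint (ip : V -> V -> R[i]) (T S : V -> V) : Prop :=
  forall x y, ip (T x) y = ip x (S y).

Definition left_invertible (T : V -> V) : Prop :=
  exists L : V -> V, bounded_op L /\ forall x, L (T x) = x.

Definition invertible_op (T : V -> V) : Prop :=
  exists G : V -> V, bounded_op G /\ (forall x, G (T x) = x) /\ (forall x, T (G x) = x).

Definition opnorm (S : V -> V) : R :=
  sup [set complex.Re `|S x| | x in [set x : V | `|x| <= 1]].

Definition op_pow (T : V -> V) (k : nat) : V -> V := iter k T.

Definition analytic_op (T : V -> V) : Prop :=
  \bigcap_(k in [set k : nat | (1 <= k)%N]) range (op_pow T k) = [set 0].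

Definition fspan (n : nat) (e : 'I_n -> V) : set V :=
  [set \sum_(i < n) c i *: e i | c in [set: 'I_n -> R[i]]].

Definition free_family (n : nat) (e : 'I_n -> V) : Prop :=
  forall c : 'I_n -> R[i], \sum_(i < n) c i *: e i = 0 -> forall i, c i = 0.

Definition dim_eq (A : set V) (n : nat) : Prop :=
  exists e : 'I_n -> V, free_family e /\ fspan e = A.

Definition kernel (T : V -> V) : set V := [set x | T x = 0].

(** codim range T = n : there are e_1..e_n linearly independent modulo
    range T such that range T + span e = V, i.e. dim (V / range T) = n *)
Definition codim_range_eq (T : V -> V) (n : nat) : Prop :=
  exists e : 'I_n -> V,
    (forall c : 'I_n -> R[i], range T (\sum_(i < n) c i *: e i) -> forall i, c i = 0)
    /\ (forall x : V, exists y (c : 'I_n -> R[i]), x = T y + \sum_(i < n) c i *: e i).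

Definition fredholm_index (T : V -> V) (i : int) : Prop :=
  closed (range T) /\
  exists k m : nat, dim_eq (kernel T) k /\ codim_range_eq T m /\ (k%:Z - m%:Z = i)%R.

Definition spectrum (S : V -> V) : set R[i] :=
  [set lam | ~ invertible_op (fun x => S x - lam *: x)].

Definition lin_span (A : set V) : set V :=
  [set v | exists (k : nat) (c : 'I_k -> R[i]) (e : 'I_k -> V),
      (forall j, A (e j)) /\ v = \sum_(j < k) c j *: e j].

(** Cowen--Douglas class B_n(Omega) (Omega is assumed open by the user;
    here it is the disc Omega_T, which is open) *)
Definition cowen_douglas (n : nat) (Omega : set R[i]) (S : V -> V) : Prop :=
  [/\ Omega `<=` spectrum S,
      (forall lam, Omega lam -> forall y, exists x, S x - lam *: x = y),
      (forall lam, Omega lam -> dim_eq (kernel (fun x => S x - lam *: x)) n) &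
      closure (lin_span (\bigcup_(lam in Omega) kernel (fun x => S x - lam *: x))) = setT].

End HilbertDefs.

(* Main.v *)
Require Import Defs.
From mathcomp Require Import all_boot all_order all_algebra.
From mathcomp Require Import all_classical all_reals all_analysis.
From mathcomp Require Import complex.
Import Order.TTheory GRing.Theory Num.Theory.
Import numFieldNormedType.Exports.
Local Open Scope ring_scope.
Local Open Scope classical_set_scope.
From mathcomp Require Import ring lra.
Local Notation "x %:C" := (real_complex _ x) : ring_scope.

Section IP.
Variables (R : realType) (V : completeNormedModType R[i]).
Variable ip : V -> V -> R[i].
Hypothesis hip : is_inner_product ip.

Lemma ipl a x y z : ip (a *: x + y) z = a * ip x z + ip y z.
Proof. by case: hip. Qed.
Lemma ipc x y : ip x y = (ip y x)^*.
Proof. by case: hip. Qed.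
Lemma ipn x : ip x x = `|x| ^+ 2.
Proof. by case: hip. Qed.

Lemma cjD (a b : R[i]) : (a + b)^* = a^* + b^*. Proof. exact: rmorphD. Qed.
Lemma cjM (a b : R[i]) : (a * b)^* = a^* * b^*. Proof. exact: rmorphM. Qed.
Lemma cjN (a : R[i]) : (- a)^* = - a^*. Proof. exact: rmorphN. Qed.

Lemma ip0l z : ip 0 z = 0.
Proof.
have := ipl 1 0 0 z; rewrite scaler0 addr0 mul1r => /eqP.
by rewrite -subr_eq0 opprD addrA subrr sub0r oppr_eq0 => /eqP.
Qed.
Lemma ip0r z : ip z 0 = 0.
Proof. by rewrite ipc ip0l conjC0. Qed.
Lemma ipDl x y z : ip (x + y) z = ip x z + ip y z.
Proof. by have := ipl 1 x y z; rewrite scale1r mul1r. Qed.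
Lemma ipZl a x z : ip (a *: x) z = a * ip x z.
Proof. by have := ipl a x 0 z; rewrite addr0 ip0l addr0. Qed.
Lemma ipNl x z : ip (- x) z = - ip x z.
Proof. by rewrite -scaleN1r ipZl mulN1r. Qed.
Lemma ipBl x y z : ip (x - y) z = ip x z - ip y z.
Proof. by rewrite ipDl ipNl. Qed.
Lemma ipDr x y z : ip z (x + y) = ip z x + ip z y.
Proof. by rewrite ipc ipDl cjD -!ipc. Qed.
Lemma ipZr a x z : ip z (a *: x) = a^* * ip z x.
Proof. by rewrite ipc ipZl cjM -ipc. Qed.
Lemma ipNr x z : ip z (- x) = - ip z x.
Proof. by rewrite ipc ipNl cjN -ipc. Qed.
Lemma ipBr x y z : ip z (x - y) = ip z x - ip z y.
Proof. by rewrite ipDr ipNr. Qed.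

Lemma ip_self_eq0 x : ip x x = 0 -> x = 0.
Proof. by rewrite ipn => /eqP; rewrite expf_eq0 /= normr_eq0 => /eqP. Qed.

Lemma ip_ext x y : (forall z, ip z x = ip z y) -> x = y.
Proof.
move=> H; apply/eqP; rewrite -subr_eq0; apply/eqP/ip_self_eq0.
by rewrite ipBr H subrr.
Qed.

Lemma CS x y : `|ip x y| <= `|x| * `|y|.
Proof.
have [->|y0] := eqVneq y 0; first by rewrite ip0r normr0 normr0 mulr0.
have ny0 : `|y| != 0 by rewrite normr_eq0.
pose a := ip x y / ip y y.
pose u := x - a *: y.
have ou : ip u y = 0.
  rewrite /u ipBl ipZl /a divfK ?subrr // ipn expf_eq0 /= (negPf ny0) //.
have xE : x = u + a *: y by rewrite /u subrK.
have nx : `|x| ^+ 2 = `|u| ^+ 2 + `|a| ^+ 2 * `|y| ^+ 2.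
  clearbody u.
  rewrite -!ipn {1 2}xE ipDl !ipDr !ipZl !ipZr.
  by rewrite ou (ipc y u) ou conjC0 !mulr0 !addr0 add0r mulrA normCK.
have hxy : `|ip x y| = `|a| * `|y| ^+ 2.
  by rewrite /a normrM normfV ipn normrX normr_id divfK // expf_neq0.
rewrite hxy -ler_sqr ?nnegrE ?mulr_ge0 ?exprn_ge0 ?normr_ge0 //.
rewrite [in leRHS]exprMn nx mulrDl.
have -> : (`|a| * `|y| ^+ 2) ^+ 2 = `|a| ^+ 2 * `|y| ^+ 2 * `|y| ^+ 2.
  by rewrite exprMn [(`|y| ^+ 2) ^+ 2]expr2 mulrA.
by rewrite lerDr mulr_ge0 ?exprn_ge0 ?normr_ge0.
Qed.

Definition nv (v : V) : R := complex.Re `|v|.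
Definition nc (c : R[i]) : R := complex.Re `|c|.

Lemma rcD (a b : R) : (a + b)%:C = a%:C + b%:C. Proof. exact: rmorphD. Qed.
Lemma rcM (a b : R) : (a * b)%:C = a%:C * b%:C. Proof. exact: rmorphM. Qed.
Lemma rcN (a : R) : (- a)%:C = - a%:C. Proof. exact: rmorphN. Qed.
Lemma rcB (a b : R) : (a - b)%:C = a%:C - b%:C. Proof. exact: rmorphB. Qed.
Lemma rcX (a : R) n : (a ^+ n)%:C = a%:C ^+ n. Proof. exact: rmorphXn. Qed.
Lemma rcV (a : R) : (a^-1)%:C = (a%:C)^-1. Proof. exact: fmorphV. Qed.
Lemma rc0 : (0 : R)%:C = 0. Proof. by []. Qed.
Lemma rc1 : (1 : R)%:C = 1. Proof. by []. Qed.
Lemma rcn n : (n%:R : R)%:C = n%:R. Proof. exact: rmorph_nat. Qed.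

Lemma ltc0R (k : R) : ((0:R[i]) < k%:C) = (0 < k).
Proof. by rewrite ltcE /= eqxx. Qed.
Lemma lec0R (k : R) : ((0:R[i]) <= k%:C) = (0 <= k).
Proof. by rewrite lecE /= eqxx. Qed.
Lemma realC_Re (z : R[i]) : z \is Num.real -> z = (complex.Re z)%:C.
Proof. by move=> /RRe_real. Qed.

Lemma normE (v : V) : `|v| = (nv v)%:C.
Proof. exact/realC_Re/normr_real. Qed.
Lemma normcE' (c : R[i]) : `|c| = (nc c)%:C.
Proof. exact/realC_Re/normr_real. Qed.
Lemma nv_ge0 v : 0 <= nv v.
Proof. by rewrite -lec0R -normE. Qed.
Lemma nc_ge0 c : 0 <= nc c.
Proof. by rewrite -lec0R -normcE'. Qed.
Lemma nv0 : nv 0 = 0.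
Proof. by rewrite /nv normr0. Qed.
Lemma nv_eq0 v : nv v = 0 -> v = 0.
Proof. by move=> h; apply/normr0_eq0; rewrite normE h. Qed.
Lemma nvD u v : nv (u + v) <= nv u + nv v.
Proof. by rewrite -lecR rcD -!normE ler_normD. Qed.
Lemma nvN v : nv (- v) = nv v.
Proof. by rewrite /nv normrN. Qed.
Lemma nvC u v : nv (u - v) = nv (v - u).
Proof. by rewrite /nv distrC. Qed.
Lemma nvZ c v : nv (c *: v) = nc c * nv v.
Proof. by apply: complexI; rewrite rcM -!normE -normcE' normrZ. Qed.
Lemma ncM a b : nc (a * b) = nc a * nc b.
Proof. by apply: complexI; rewrite rcM -!normcE' normrM. Qed.
Lemma ipnR v : ip v v = (nv v ^+ 2)%:C.
Proof. by rewrite ipn rcX normE. Qed.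
Lemma CSR x y : nc (ip x y) <= nv x * nv y.
Proof. by rewrite -lecR rcM -!normE -normcE' CS. Qed.
Lemma nvB u v w : nv (u - w) <= nv (u - v) + nv (v - w).
Proof. by rewrite (le_trans _ (nvD _ _)) // addrA subrK. Qed.

Lemma parallelogram u v :
  nv (u + v) ^+ 2 + nv (u - v) ^+ 2 = 2 * nv u ^+ 2 + 2 * nv v ^+ 2.
Proof.
apply: complexI; rewrite !rcD !rcM -!normE -!expr2 -!ipn rcn.
rewrite !ipDl !ipDr !ipNl !ipNr.
by ring.
Qed.


Lemma archi_inv (e : R) : 0 < e -> exists N : nat, forall n, (N <= n)%N -> (n.+1%:R)^-1 < e.
Proof.
move=> e0; exists (Num.truncn e^-1) => n Nn.
have h := truncnS_gt (e^-1).
rewrite -(invrK e) ltf_pV2 ?posrE ?invr_gt0 ?ltr0Sn //.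
apply: (lt_le_trans h); by rewrite ler_nat ltnS.
Qed.

Lemma cauchy_nv (u : nat -> V) :
  (forall e : R, 0 < e -> exists N, forall m n, (N <= m)%N -> (N <= n)%N -> nv (u m - u n) < e) ->
  exists l : V, forall e : R, 0 < e -> exists N, forall n, (N <= n)%N -> nv (l - u n) < e.
Proof.
move=> H.
have : cvgn u.
  apply: cauchy_cvg.
  apply/cauchy_ballP => e e0.
  have er : e = (complex.Re e)%:C by apply: realC_Re; exact: gtr0_real.
  have e0' : 0 < complex.Re e by rewrite -ltc0R -er.
  have [N HN] := H _ e0'.
  near_simpl.
  exists ([set n | (N <= n)%N], [set n | (N <= n)%N]); first by split; exists N.
  move=> [m n] [/= Nm Nn]; rewrite -ball_normE /= er normE ltcR; exact: HN.
move=> /cvgrPdist_lt cu; exists (limn u) => e e0.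
have : (0 : R[i]) < e%:C by rewrite ltc0R.
move=> /cu [N _ HN]; exists N => n Nn; rewrite -ltcR -normE; exact: HN.
Qed.


Lemma nc2 : nc 2 = 2.
Proof. by rewrite /nc normr_nat -rcn. Qed.

Lemma two_mid (x a b : V) :
  x - a + (x - b) = (2 : R[i]) *: (x - (2^-1 *: a + 2^-1 *: b)).
Proof.
rewrite scalerBr scalerDr !scalerA mulfV ?pnatr_eq0 // !scale1r scaler_nat mulr2n.
by rewrite opprD addrACA.
Qed.

Lemma proj_min (A : set V) (A0 : A 0)
  (Acl : forall c u v, A u -> A v -> A (c *: u + v)) (x : V) :
  exists p, (forall e : R, 0 < e -> exists a, A a /\ nv (p - a) < e) /\
    (forall c a, A a -> nv (x - p) <= nv (x - p - c *: a)).
Proof.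
pose E := [set nv (x - a) | a in A].
have E0 : E !=set0 by exists (nv (x - 0)); exists 0.
have Elb : has_lbound E by exists 0 => _ [a _ <-]; exact: nv_ge0.
pose d := inf E.
have dlb a : A a -> d <= nv (x - a) by move=> Aa; apply: ge_inf => //; exists a.
have d0 : 0 <= d by apply: lb_le_inf => // _ [a _ <-]; exact: nv_ge0.
have Amid a b : A a -> A b -> A (2^-1 *: a + 2^-1 *: b).
  by move=> Aa Ab; apply: (Acl) => //; rewrite -[X in A X]addr0; apply: (Acl).
have : forall k : nat, exists a, A a /\ nv (x - a) < d + (k.+1%:R)^-1.
  move=> k; have hk : 0 < (k.+1%:R : R)^-1 by rewrite invr_gt0 ltr0Sn.
  have [_ [a Aa <-] h] := inf_adherent hk (conj E0 Elb).
  by exists a.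
move=> /choice [s hs].
have key m n : nv (s n - s m) ^+ 2 <= 4 * d * ((m.+1%:R)^-1 + (n.+1%:R)^-1) +
    2 * ((m.+1%:R)^-1) ^+ 2 + 2 * ((n.+1%:R)^-1) ^+ 2.
  have := parallelogram (x - s m) (x - s n).
  rewrite two_mid nvZ nc2 (_ : x - s m - (x - s n) = s n - s m); last first.
    by rewrite opprB addrC addrA subrK.
  have := dlb _ (Amid _ _ (hs m).1 (hs n).1).
  have := (hs m).2; have := (hs n).2.
  have := nv_ge0 (x - s m); have := nv_ge0 (x - s n).
  set um := nv (x - s m); set un := nv (x - s n); set w := nv (s n - s m).
  set z := nv (x - _).
  have : 0 < (m.+1%:R : R)^-1 by rewrite invr_gt0 ltr0Sn.
  have : 0 < (n.+1%:R : R)^-1 by rewrite invr_gt0 ltr0Sn.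
  set em := (m.+1%:R)^-1; set en := (n.+1%:R)^-1.
  move=> en0 em0 un0 um0 hn hm hz hp.
  have h1 : um ^+ 2 <= (d + em) ^+ 2 by nra.
  have h2 : un ^+ 2 <= (d + en) ^+ 2 by nra.
  have h3 : (2 * d) ^+ 2 <= (2 * z) ^+ 2 by nra.
  nra.
have em1 m : (m.+1%:R : R)^-1 <= 1 by rewrite invf_le1 ?ler1n ?ltr0Sn.
have em0 m : 0 < (m.+1%:R : R)^-1 by rewrite invr_gt0 ltr0Sn.
have cau : forall e : R, 0 < e -> exists N, forall m n, (N <= m)%N -> (N <= n)%N ->
    nv (s m - s n) < e.
  move=> e e0.
  have K0 : 0 < 8 * d + 4 by lra.
  have [N hN] := archi_inv _ (divr_gt0 (mulr_gt0 e0 e0) K0).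
  exists N => m n Nm Nn.
  have := key n m; have := hN _ Nm; have := hN _ Nn.
  have := em1 m; have := em1 n; have := em0 m; have := em0 n.
  have := nv_ge0 (s m - s n).
  set w := nv _; set em := (m.+1%:R)^-1; set en := (n.+1%:R)^-1.
  rewrite ltr_pdivlMr // ltr_pdivlMr //.
  move=> w0 en0 em0' en1 em1' hn hm hk.
  nra.
have [p hp] := cauchy_nv _ cau.
exists p; split.
  move=> e e0; have [N hN] := hp e e0; exists (s N); split; first exact: (hs N).1.
  exact: hN.
move=> c a Aa.
suff H : forall eps : R, 0 < eps -> nv (x - p) <= nv (x - p - c *: a) + eps.
  by apply/ler_addgt0Pr => e e0; exact: H.
move=> eps eps0.
have eps3 : 0 < eps / 3 by rewrite divr_gt0.
have [N1 h1] := hp _ eps3; have [N2 h2] := archi_inv _ eps3.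
pose n := maxn N1 N2.
have := h1 n (leq_maxl _ _); have := h2 n (leq_maxr _ _).
have := (hs n).2; have := dlb _ (Acl c _ _ Aa (hs n).1).
have := nvB x (s n) p; rewrite (nvC (s n) p).
have := nvD (x - p - c *: a) (p - s n).
rewrite (_ : x - p - c *: a + (p - s n) = x - (c *: a + s n)); last first.
  by rewrite addrAC -(addrA x) addKr opprD addrA addrAC.
clearbody n d; move: (n.+1%:R^-1) => t.
move=> H1 H2 H3 H4 H5 H6; lra.
Qed.


Lemma cj_rc (t : R) : (t%:C)^* = t%:C.
Proof. by apply: conj_Creal; apply/complex_realP; exists t. Qed.

Lemma min_orth (w a : V) : (forall c : R[i], nv w <= nv (w - c *: a)) -> ip w a = 0.
Proof.
move=> H.
set b := ip w a; set al := nv a; set be := nc b.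
pose t : R := (al ^+ 2 + 1)^-1.
have t0 : 0 < t by rewrite invr_gt0; have := nv_ge0 a; rewrite -/al; nra.
have ta : t * al ^+ 2 < 1.
  by rewrite mulrC ltr_pdivrMr; [lra | have := nv_ge0 a; rewrite -/al; nra].
have h := H (t%:C * b).
have h2 : nv w ^+ 2 <= nv (w - (t%:C * b) *: a) ^+ 2.
  by have := nv_ge0 w; nra.
have E : ip (w - (t%:C * b) *: a) (w - (t%:C * b) *: a) =
    (nv w ^+ 2 - 2 * t * be ^+ 2 + t ^+ 2 * be ^+ 2 * al ^+ 2)%:C.
  rewrite !ipBl !ipBr !ipZl !ipZr (ipc a w) -/b cjM cj_rc ipnR (ipnR a) -/al.
  rewrite !rcD !rcN !rcM rcn /be -!normcE'.
  rewrite (_ : `|b| * `|b| = b * b^*); last by rewrite -normCK.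
  ring.
move: h2; rewrite -lecR -!ipnR E ipnR lecR => h3.
have h4 : be ^+ 2 * (t * (2 - t * al ^+ 2)) <= 0 by nra.
have h5 : 0 < t * (2 - t * al ^+ 2) by apply: mulr_gt0 => //; lra.
have h6 : be ^+ 2 <= 0 by rewrite -(pmulr_lle0 _ h5).
have be0 : be = 0 by have := nc_ge0 b; rewrite -/be; nra.
by apply/normr0_eq0; rewrite normcE' -/be be0.
Qed.


Lemma proj_orth (A : set V) (A0 : A 0)
  (Acl : forall c u v, A u -> A v -> A (c *: u + v)) (x : V) :
  exists p : V, (forall e : R, 0 < e -> exists a, A a /\ nv (p - a) < e) /\
    (forall a, A a -> ip (x - p) a = 0).
Proof.
have [p [h1 h2]] := proj_min _ A0 Acl x.
exists p; split => // a Aa; apply: min_orth => c; exact: h2.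
Qed.

Lemma dense_orth (A : set V) (A0 : A 0)
  (Acl : forall c u v, A u -> A v -> A (c *: u + v)) :
  (forall x, (forall a, A a -> ip x a = 0) -> x = 0) -> closure A = setT.
Proof.
move=> H; apply/seteqP; split => // v _.
have [p [h1 h2]] := proj_orth _ A0 Acl v.
have vp : v = p by apply/eqP; rewrite -subr_eq0; apply/eqP/H.
rewrite vp => B /nbhs_ballP [e e0 eB].
have er : e = (complex.Re e)%:C by apply: realC_Re; exact: gtr0_real.
have e0' : 0 < complex.Re e by rewrite -ltc0R -er.
have [a [Aa ha]] := h1 _ e0'.
exists a; split => //; apply: eB; rewrite -ball_normE /= er normE ltcR; exact: ha.
Qed.

Lemma riesz (f : V -> R[i]) (flin : forall a u v, f (a *: u + v) = a * f u + f v)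
  (M : R) (fb : forall v, nc (f v) <= M * nv v) :
  exists w, forall z, f z = ip z w.
Proof.
have f0 : f 0 = 0.
  have := flin 1 0 0; rewrite scaler0 addr0 mul1r => /eqP.
  by rewrite -subr_eq0 opprD addrA subrr sub0r oppr_eq0 => /eqP.
have fB u v : f (u - v) = f u - f v.
  by rewrite addrC -scaleN1r flin mulN1r addrC.
have fZ a u : f (a *: u) = a * f u by rewrite -[a *: u]addr0 flin f0 addr0.
have [allz|] := pselect (forall v, f v = 0).
  by exists 0 => z; rewrite allz ip0r.
move=> /existsNP [x0 fx0].
pose K := [set v | f v = 0].
have K0 : K 0 by [].
have Kcl c u v : K u -> K v -> K (c *: u + v).
  by rewrite /K /= flin => -> ->; rewrite mulr0 addr0.
have [p [h1 h2]] := proj_orth _ K0 Kcl x0.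
have fp : f p = 0.
  apply/normr0_eq0; rewrite normcE'; congr (_%:C).
  apply/le_anti; rewrite nc_ge0 andbT.
  apply/ler_addgt0Pr => e e0; rewrite add0r.
  have Mp : 0 < `|M| + 1 by rewrite ltr_pwDr // normr_ge0.
  have [a [Ka ha]] := h1 _ (divr_gt0 e0 Mp).
  have := fb (p - a); rewrite fB Ka subr0 => hf.
  apply: (le_trans hf).
  have := nv_ge0 (p - a); move: ha; rewrite ltr_pdivlMr // => ha ha0.
  have hM : M <= `|M| by exact: ler_norm.
  have := normr_ge0 M; nra.
pose z := x0 - p.
have fz : f z = f x0 by rewrite /z fB fp subr0.
have z0 : z != 0 by apply/eqP => z0; apply: fx0; rewrite -fz z0.
have izz : ip z z != 0 by rewrite ipn expf_eq0 /= normr_eq0.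
exists ((f z / ip z z)^* *: z) => y.
have Kk : K (f y *: z - f z *: y).
  by rewrite /K /= fB !fZ mulrC subrr.
have := h2 _ Kk; rewrite -/z ipc ipBl !ipZl => /eqP.
rewrite conjC_eq0 subr_eq0 => /eqP hy.
rewrite ipZr conjCK; apply: (mulIf izz).
by rewrite hy mulrAC divfK.
Qed.


Lemma geo_small (q e : R) : 0 <= q -> q < 1 -> 0 < e ->
  exists N, forall n, (N <= n)%N -> q ^+ n < e.
Proof.
move=> q0 q1 e0.
have hq : `|q| < 1 by rewrite ger0_norm.
have /cvgrPdist_lt h := cvg_expr hq.
have [N _ hN] := h e e0.
exists N => n Nn; have := hN n Nn.
by rewrite /= sub0r normrN ger0_norm ?exprn_ge0.
Qed.

Lemma fixpt (F : V -> V) (q : R) (q0 : 0 <= q) (q1 : q < 1)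
  (Flip : forall u v, nv (F u - F v) <= q * nv (u - v)) : exists x, F x = x.
Proof.
pose y k := iter k F 0.
pose C := nv (F 0 - 0).
have C0 : 0 <= C by exact: nv_ge0.
have step k : nv (y k.+1 - y k) <= q ^+ k * C.
  elim: k => [|k ih]; first by rewrite expr0 mul1r.
  apply: (le_trans (Flip _ _)); rewrite exprS -mulrA; exact: ler_wpM2l.
have q1' : 0 < 1 - q by lra.
have dist n m : nv (y (n + m)%N - y n) <= C * q ^+ n * (1 - q ^+ m) / (1 - q).
  elim: m => [|m ih]; first by rewrite addn0 subrr nv0 expr0 subrr mulr0 mul0r.
  apply: (le_trans (nvB _ (y (n + m)%N) _)).
  rewrite addnS ler_pdivlMr //.
  have := step (n + m)%N; rewrite exprD.
  move: ih; rewrite ler_pdivlMr // exprS.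
  have := exprn_ge0 n q0; have := exprn_ge0 m q0.
  set a := q ^+ n; set b := q ^+ m.
  move=> b0 a0 h1 h2; nra.
have dist' n m : nv (y (n + m)%N - y n) <= C * q ^+ n / (1 - q).
  apply: (le_trans (dist n m)); rewrite ler_pM2r ?invr_gt0 //.
  rewrite -[X in _ <= X]mulr1 ler_wpM2l ?mulr_ge0 ?exprn_ge0 //.
  by rewrite lerBlDr lerDl exprn_ge0.
have cau : forall e : R, 0 < e -> exists N, forall m n, (N <= m)%N -> (N <= n)%N ->
    nv (y m - y n) < e.
  move=> e e0.
  have [N hN] := geo_small _ _ q0 q1 (divr_gt0 (mulr_gt0 e0 q1') (ltr_pwDr ltr01 C0)).
  exists N => m n Nm Nn.
  have gen a b : (N <= a)%N -> (a <= b)%N -> nv (y b - y a) < e.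
    move=> Na ab; rewrite -(subnKC ab); apply: (le_lt_trans (dist' _ _)).
    have := hN a Na; rewrite ltr_pdivlMr ?ltr_pwDr ?ltr01 //.
    move: (exprn_ge0 a q0); move: (q ^+ a) => t t0 h.
    rewrite ltr_pdivrMr //; nra.
  have [mn|nm] := leqP m n; first by rewrite nvC; apply: gen.
  by apply: gen => //; exact: ltnW.
have [l hl] := cauchy_nv _ cau.
exists l; apply/eqP; rewrite -subr_eq0; apply/eqP/nv_eq0; apply/le_anti; rewrite nv_ge0 andbT.
apply/ler_addgt0Pr => e e0; rewrite add0r.
have e2 : 0 < e / 2 by rewrite divr_gt0.
have [N hN] := hl _ e2.
have h1 := hN N (leqnn N); have h2 := hN N.+1 (leqnSn N).
have := Flip l (y N); have := nvB (F l) (y N.+1) l.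
rewrite (nvC (y N.+1) l) /=.
have := nv_ge0 (l - y N).
move=> *; nra.
Qed.


Lemma lin0 (g : V -> V) (hg : forall a u v, g (a *: u + v) = a *: g u + g v) : g 0 = 0.
Proof.
have := hg 1 0 0; rewrite scaler0 addr0 scale1r => /eqP.
by rewrite -subr_eq0 opprD addrA subrr sub0r oppr_eq0 => /eqP.
Qed.

Lemma lin_sum (g : V -> V) (hg : forall a u v, g (a *: u + v) = a *: g u + g v)
  n (c : 'I_n -> R[i]) (e : 'I_n -> V) :
  g (\sum_(i < n) c i *: e i) = \sum_(i < n) c i *: g (e i).
Proof.
elim: n c e => [|n ih] c e; first by rewrite !big_ord0 (lin0 _ hg).
by rewrite !big_ord_recr /= addrC hg ih addrC.
Qed.

Lemma lin_span0 (K : set V) : lin_span K 0.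
Proof. by exists 0%N, (fun _ => 0), (fun _ => 0); split; [by case | by rewrite big_ord0]. Qed.

Lemma lin_span1 (K : set V) k : K k -> lin_span K k.
Proof.
move=> Kk; exists 1%N, (fun _ => 1), (fun _ => k); split => //.
by rewrite big_ord1 scale1r.
Qed.

Lemma lin_span_cl (K : set V) c u v :
  lin_span K u -> lin_span K v -> lin_span K (c *: u + v).
Proof.
move=> [k1 [c1 [e1 [h1 ->]]]] [k2 [c2 [e2 [h2 ->]]]].
exists (k1 + k2)%N.
exists (fun j => match fintype.split j with inl a => c * c1 a | inr b => c2 b end).
exists (fun j => match fintype.split j with inl a => e1 a | inr b => e2 b end).
split.
  by move=> j; case: (fintype.split j).
rewrite big_split_ord /= scaler_sumr.
congr (_ + _); apply: eq_bigr => i _.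
  by rewrite (unsplitK (inl i : 'I_k1 + 'I_k2)) scalerA.
by rewrite (unsplitK (inr i : 'I_k1 + 'I_k2)).
Qed.


Lemma nc_rc (k : R) : 0 <= k -> nc (k%:C) = k.
Proof. by move=> k0; rewrite /nc ger0_norm ?lec0R. Qed.

Lemma linB (g : V -> V) (hg : forall a u v, g (a *: u + v) = a *: g u + g v) u v :
  g (u - v) = g u - g v.
Proof. by rewrite addrC -scaleN1r hg scaleN1r addrC. Qed.

Lemma bnd (f : V -> V) : bounded_op f -> exists M : R, 0 <= M /\ forall x, nv (f x) <= M * nv x.
Proof.
move=> [_ [M hM]]; exists (nc M); split; first exact: nc_ge0.
move=> x; have h := hM x.
have h0 : 0 <= M * `|x| := le_trans (normr_ge0 _) h.
rewrite -lecR rcM -!normE -normcE'.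
by rewrite -[`|x|]normr_id -normrM ger0_norm.
Qed.

Variables (T S D : V -> V).
Hypotheses (hT : bounded_op T) (hS : bounded_op S) (hadj : is_adjoint ip T S)
  (hdag : forall x, S (T (D x)) = S x) (hli : left_invertible T).

Let TL : forall a u v, T (a *: u + v) = a *: T u + T v := hT.1.
Let SL : forall a u v, S (a *: u + v) = a *: S u + S v := hS.1.

Lemma STinj z : S (T z) = 0 -> z = 0.
Proof.
move=> h; have [L [[LL _] hL]] := hli.
have Tz : T z = 0 by apply: ip_self_eq0; rewrite hadj h ip0r.
by rewrite -(hL z) Tz (lin0 _ LL).
Qed.

Lemma DT x : D (T x) = x.
Proof.
apply/eqP; rewrite -subr_eq0; apply/eqP/STinj.
by rewrite (linB _ TL) (linB _ SL) hdag subrr.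
Qed.

Lemma DL a u v : D (a *: u + v) = a *: D u + D v.
Proof.
apply/eqP; rewrite -subr_eq0; apply/eqP/STinj.
by rewrite (linB _ TL) (linB _ SL) hdag TL !SL !hdag subrr.
Qed.

Lemma Dbnd : exists M : R, forall x, nv (D x) <= M * nv x.
Proof.
have [L [hL hLT]] := hli.
have [ML [ML0 hML]] := bnd _ hL.
have [MS [MS0 hMS]] := bnd _ hS.
have key x : nv x <= ML ^+ 2 * nv (S (T x)).
  have h1 : nv x <= ML * nv (T x) by rewrite -{1}(hLT x); exact: hML.
  have h2 : nv (T x) ^+ 2 <= nv x * nv (S (T x)).
    have -> : nv (T x) ^+ 2 = nc (ip (T x) (T x)).
      by rewrite ipnR nc_rc // exprn_ge0 // nv_ge0.
    rewrite hadj; exact: CSR.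
  have := nv_ge0 x; have := nv_ge0 (T x); have := nv_ge0 (S (T x)).
  move=> s0 t0 x0.
  have [->|xp] := eqVneq (nv x) 0; first by rewrite mulr_ge0 // exprn_ge0.
  have xp' : 0 < nv x by rewrite lt_neqAle eq_sym xp x0.
  have h3 : nv x ^+ 2 <= ML ^+ 2 * nv x * nv (S (T x)).
    apply: (le_trans (y := (ML * nv (T x)) ^+ 2)); first by rewrite ler_pXn2r ?nnegrE // mulr_ge0.
    by rewrite exprMn -mulrA ler_wpM2l ?exprn_ge0 // mulrC.
  rewrite -(ler_pM2l xp') -expr2 (le_trans h3) //.
  by rewrite mulrA (mulrC (nv x)).
exists (ML ^+ 2 * MS) => x.
apply: (le_trans (key _)); rewrite hdag -mulrA ler_wpM2l ?exprn_ge0 //.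
Qed.


Lemma D0 : D 0 = 0. Proof. exact: (lin0 _ DL). Qed.
Lemma DZ a u : D (a *: u) = a *: D u.
Proof. by have := DL a u 0; rewrite !addr0 D0 addr0. Qed.

Lemma r_prop : 0 <= opnorm D /\ forall x, nv (D x) <= opnorm D * nv x.
Proof.
have [M hM] := Dbnd.
pose E := [set complex.Re `|D x| | x in [set x : V | `|x| <= 1]].
have rE : opnorm D = sup E by [].
have E0 : E (nv (D 0)) by exists 0 => //=; rewrite normr0 ler01.
have hsup : has_sup E.
  split; first by exists (nv (D 0)).
  exists `|M| => _ [x /= hx <-].
  have hx' : nv x <= 1 by move: hx; rewrite normE -rc1 lecR.
  have := hM x; have := nv_ge0 x; have := ler_norm M; have := normr_ge0 M.
  rewrite /nv => *; nra.
have ub x : `|x| <= 1 -> nv (D x) <= opnorm D.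
  by move=> hx; rewrite rE; apply: (ub_le_sup hsup.2); exists x.
have r0 : 0 <= opnorm D.
  by apply: (le_trans (nv_ge0 (D 0))); apply: ub; rewrite normr0 ler01.
split => // x.
have [->|x0] := eqVneq x 0; first by rewrite D0 nv0 mulr0.
have nx : 0 < nv x.
  by rewrite lt_neqAle nv_ge0 andbT eq_sym (contra_neq (nv_eq0 x) x0).
pose u := ((nv x)^-1)%:C *: x.
have nu : nv u = 1.
  by rewrite /u nvZ nc_rc ?invr_ge0 ?ltW // mulVf // gt_eqF.
have hu : `|u| <= 1 by rewrite normE nu rc1.
have := ub u hu.
rewrite /u DZ nvZ nc_rc; last by rewrite invr_ge0 ltW.
by rewrite mulrC ler_pdivrMr // mulrC.
Qed.

Lemma Rex : exists Rf : V -> V, forall z y, ip (D z) y = ip z (Rf y).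
Proof.
have [r0 hr] := r_prop.
have : forall y, exists w, forall z, ip (D z) y = ip z w.
  move=> y; apply: (@riesz (fun z => ip (D z) y) _ (opnorm D * nv y)).
    by move=> a u v /=; rewrite DL ipl.
  move=> v /=; apply: (le_trans (CSR _ _)).
  by rewrite mulrAC ler_wpM2r ?nv_ge0.
by move=> /choice [Rf hRf]; exists Rf.
Qed.

Variable Rf : V -> V.
Hypothesis hR : forall z y, ip (D z) y = ip z (Rf y).

Lemma RL a u v : Rf (a *: u + v) = a *: Rf u + Rf v.
Proof.
apply: ip_ext => z.
by rewrite -hR ipDr ipZr ipDr ipZr -!hR.
Qed.

Lemma SR y : S (Rf y) = y.
Proof. by apply: ip_ext => z; rewrite -hadj -hR DT. Qed.

Lemma Rbnd y : nv (Rf y) <= opnorm D * nv y.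
Proof.
have [r0 hr] := r_prop.
have h : nv (Rf y) ^+ 2 <= opnorm D * nv (Rf y) * nv y.
  have -> : nv (Rf y) ^+ 2 = nc (ip (Rf y) (Rf y)).
    by rewrite ipnR nc_rc // exprn_ge0 // nv_ge0.
  rewrite -hR (le_trans (CSR _ _)) // ler_wpM2r ?nv_ge0 //.
have := nv_ge0 (Rf y); have := nv_ge0 y.
move=> y0 ry0.
have [e0|p0] := eqVneq (nv (Rf y)) 0; first by rewrite e0 mulr_ge0.
have p : 0 < nv (Rf y) by rewrite lt_neqAle eq_sym p0 ry0.
nra.
Qed.


Lemma Tinj v : T v = 0 -> v = 0.
Proof. by move=> h; apply: STinj; rewrite h (lin0 _ SL). Qed.

Lemma kerD k : S k = 0 -> D k = 0.
Proof. by move=> h; apply: STinj; rewrite hdag h. Qed.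

Lemma kerS_dim (n : nat) : fredholm_index T (- n%:Z) ->
  exists f : 'I_n -> V, free_family f /\ fspan f = Defs.kernel S.
Proof.
move=> [_ [k [m [[g [gfree gspan]] [hm e]]]]].
have k0 : k = 0%N.
  case: k g gfree gspan e => [//|k] g gfree gspan e.
  have : fspan g (\sum_(i < k.+1) (fun _ => 1) i *: g i) by exists (fun _ => 1).
  rewrite gspan => /Tinj /gfree /(_ ord0) /eqP; by rewrite oner_eq0.
move: e; rewrite k0 sub0r => /eqP; rewrite eqr_opp => /eqP [] mn.
move: hm; rewrite mn => -[e [efree espan]].
pose P x := x - T (D x).
have PL a u v : P (a *: u + v) = a *: P u + P v.
  by rewrite /P DL TL scalerBr opprD addrACA.
exists (fun i => P (e i)); split.
  move=> c hc; apply: efree.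
  have h : P (\sum_(i < n) c i *: e i) = 0 by rewrite (lin_sum _ PL).
  exists (D (\sum_(i < n) c i *: e i)) => //.
  by apply/eqP; rewrite eq_sym -subr_eq0; apply/eqP; exact: h.
apply/seteqP; split.
  move=> _ [c _ <-]; rewrite /Defs.kernel /= (lin_sum _ SL) big1 // => i _.
  by rewrite /P (linB _ SL) hdag subrr scaler0.
move=> x /= Sx; have [y [c xE]] := espan x.
exists c => //.
rewrite -(lin_sum _ PL).
have -> : \sum_(i < n) c i *: e i = x - T y by rewrite xE addrC addKr.
have TN : T (- y) = - T y by rewrite -sub0r (linB _ TL) (lin0 _ TL) sub0r.
by rewrite /P (linB _ DL) (kerD _ Sx) DT sub0r TN opprK subrK.
Qed.


Lemma RLB u v : Rf (u - v) = Rf u - Rf v. Proof. exact: (linB _ RL). Qed.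
Lemma SZ a u : S (a *: u) = a *: S u.
Proof. by have := SL a u 0; rewrite !addr0 (lin0 _ SL) addr0. Qed.

Lemma GS lam x : S (x - lam *: Rf x) = S x - lam *: x.
Proof. by rewrite (linB _ SL) SZ SR. Qed.

Lemma GL lam a u v : (a *: u + v) - lam *: Rf (a *: u + v) =
  a *: (u - lam *: Rf u) + (v - lam *: Rf v).
Proof. by rewrite RL scalerDr !scalerBr !scalerA mulrC opprD addrACA. Qed.

Lemma G_inj lam : nc lam * opnorm D < 1 -> forall x, x - lam *: Rf x = 0 -> x = 0.
Proof.
move=> hq x /eqP; rewrite subr_eq0 => /eqP hx.
apply: nv_eq0; apply/le_anti; rewrite nv_ge0 andbT.
have h : nv x <= nc lam * opnorm D * nv x.
  rewrite {1}hx nvZ -mulrA ler_wpM2l ?nc_ge0 //; exact: Rbnd.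
have := nv_ge0 x; have := nc_ge0 lam; have := (r_prop).1; nra.
Qed.

Lemma G_solve lam : nc lam * opnorm D < 1 -> forall w, exists x, x - lam *: Rf x = w.
Proof.
move=> hq w.
have q0 : 0 <= nc lam * opnorm D by rewrite mulr_ge0 ?nc_ge0 ?(r_prop).1.
have Flip : forall u v, nv ((w + lam *: Rf u) - (w + lam *: Rf v)) <=
    nc lam * opnorm D * nv (u - v).
  move=> u v /=; rewrite opprD addrACA subrr add0r -scalerBr -RLB nvZ -mulrA.
  rewrite ler_wpM2l ?nc_ge0 //; exact: Rbnd.
have [x hx] := @fixpt (fun x => w + lam *: Rf x) _ q0 hq Flip.
by exists x; rewrite -{1}hx addrK.
Qed.

Lemma free_nz n (g : 'I_n -> V) : free_family g -> forall i, g i != 0.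
Proof.
move=> gf i; apply/eqP => gi.
have := gf (fun j => if j == i then 1 else 0).
have h : \sum_(j < n) (if j == i then 1 else 0) *: g j = 0.
  by rewrite big1 // => j _; case: eqP => [->|_]; rewrite ?gi ?scaler0 ?scale0r.
move=> /(_ h i) /=; rewrite eqxx => /eqP; by rewrite oner_eq0.
Qed.

Lemma kerSl_dim lam n (f : 'I_n -> V) : nc lam * opnorm D < 1 ->
  free_family f -> fspan f = Defs.kernel S ->
  dim_eq (Defs.kernel (fun x => S x - lam *: x)) n.
Proof.
move=> hq ff fs.
have : forall i, exists g, g - lam *: Rf g = f i by move=> i; exact: G_solve.
move=> /choice [g hg].
have Gsum (c : 'I_n -> R[i]) : (\sum_(i < n) c i *: g i) - lam *: Rf (\sum_(i < n) c i *: g i) =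
    \sum_(i < n) c i *: f i.
  rewrite (@lin_sum (fun x => x - lam *: Rf x)); last exact: GL.
  by apply: eq_bigr => i _; rewrite hg.
exists g; split.
  move=> c hc; apply: ff; rewrite -Gsum hc.
  by rewrite (lin0 _ RL) scaler0 subr0.
apply/seteqP; split.
  move=> _ [c _ <-]; rewrite /Defs.kernel /= -GS Gsum.
  have : fspan f (\sum_(i < n) c i *: f i) by exists c.
  by rewrite fs.
move=> k /= hk.
have : Defs.kernel S (k - lam *: Rf k) by rewrite /Defs.kernel /= GS.
rewrite -fs => -[c _ hc]; exists c => //.
apply/eqP; rewrite -subr_eq0; apply/eqP; apply: (G_inj _ hq).
rewrite (@linB (fun x => x - lam *: Rf x) (GL lam)) /=.
by rewrite Gsum hc subrr.
Qed.


Lemma cd_main n : (0 < n)%N -> analytic_op T -> fredholm_index T (- n%:Z) ->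
  cowen_douglas n [set z : R[i] | `|z| < ((opnorm D)^-1)%:C] S.
Proof.
move=> hn han hind.
have [f [ff fs]] := kerS_dim n hind.
have [r0 hr] := r_prop.
pose i0 : 'I_n := Ordinal hn.
have f0 := @free_nz _ _ ff i0.
have rpos : 0 < opnorm D.
  rewrite lt_neqAle r0 andbT; apply/eqP => r0'.
  move: f0; rewrite -(DT (f i0)) => /eqP; apply; apply: nv_eq0.
  by apply/le_anti; rewrite nv_ge0 andbT (le_trans (hr _)) // -r0' mul0r.
have hq lam : `|lam| < ((opnorm D)^-1)%:C -> nc lam * opnorm D < 1.
  by rewrite normcE' ltcR => h; rewrite -ltr_pdivlMr // div1r.
pose Om := [set z : R[i] | `|z| < ((opnorm D)^-1)%:C].
have Gsurj lam : Om lam -> forall y, exists x, S x - lam *: x = y.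
  move=> hl y; have [x hx] := G_solve _ (hq _ hl) (Rf y).
  by exists x; rewrite -GS hx SR.
split.
- move=> lam hl [G [_ [hG _]]].
  have [g [gf gs]] := kerSl_dim _ _ _ (hq _ hl) ff fs.
  have g0 := @free_nz _ _ gf i0.
  have : Defs.kernel (fun x => S x - lam *: x) (g i0) by rewrite -gs; exists (fun j => if j == i0 then 1 else 0) => //; rewrite (bigD1 i0) //= ?eqxx scale1r big1 ?addr0 // => j /negPf ->; rewrite scale0r.
  rewrite /Defs.kernel /= => hk.
  have e1 := hG (g i0); rewrite hk in e1.
  have e2 := hG 0; rewrite (lin0 _ SL) scaler0 subr0 in e2.
  by move: g0; rewrite -e1 e2 eqxx.
- exact: Gsurj.
- move=> lam hl; exact: kerSl_dim _ _ _ (hq _ hl) ff fs.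
apply: dense_orth; [exact: lin_span0 | exact: lin_span_cl | move=> x hx].
pose Pd z := forall lam, Om lam -> forall k, S k - lam *: k = 0 -> ip z k = 0.
have Px : Pd x.
  by move=> lam hl k hk; apply: hx; apply: lin_span1; exists lam.
have Om0 : Om 0 by rewrite /Om /= normr0 ltc0R invr_gt0.
have c1 z : Pd z -> z = T (D z).
  move=> hz; pose e := z - T (D z).
  have Se : S e = 0 by rewrite /e (linB _ SL) hdag subrr.
  have h1 : ip z e = 0 by apply: (hz 0 Om0); rewrite scale0r subr0.
  have h2 : ip (T (D z)) e = 0 by rewrite hadj Se ip0r.
  have : ip e e = 0 by rewrite {1}/e ipBl h1 h2 subrr.
  by move/ip_self_eq0/eqP; rewrite subr_eq0 => /eqP.
have c2 z : Pd z -> Pd (D z).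
  move=> hz.
  have hne mu : Om mu -> mu != 0 -> forall k, S k - mu *: k = 0 -> ip (D z) k = 0.
    move=> hm mu0 k hk.
    have Sk : S k = mu *: k by apply/eqP; rewrite -subr_eq0; apply/eqP.
    have := hz mu hm k hk; rewrite {1}(c1 z hz) hadj Sk ipZr => /eqP.
    by rewrite mulf_eq0 conjC_eq0 (negPf mu0) /= => /eqP.
  move=> lam hl k hk; have [l0|l0] := eqVneq lam 0; last exact: (hne lam hl l0 k hk).
  move: hk; rewrite l0 scale0r subr0 => Sk.
  apply/normr0_eq0; rewrite normcE'.
  suff -> : nc (ip (D z) k) = 0 by [].
  apply/le_anti; rewrite nc_ge0 andbT.
  suff H : forall eps : R, 0 < eps -> nc (ip (D z) k) <= eps.
    by apply/ler_addgt0Pr => e e0; rewrite add0r; exact: H.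
  move=> eps eps0.
  pose X := nv (D z) * nv k.
  have X0 : 0 <= X by rewrite mulr_ge0 ?nv_ge0.
  pose mu := eps / (2 * opnorm D * (X + eps + 1)).
  have den : 0 < X + eps + 1 by lra.
  have mu0 : 0 < mu by rewrite divr_gt0 // !mulr_gt0.
  have mur : mu * opnorm D * (2 * (X + eps + 1)) = eps.
    have d0 : 2 * opnorm D * (X + eps + 1) != 0 by rewrite lt0r_neq0 // !mulr_gt0.
    rewrite /mu -mulrA (_ : opnorm D * (2 * (X + eps + 1)) = 2 * opnorm D * (X + eps + 1)).
      exact: divfK.
    by rewrite mulrA (mulrC (opnorm D)).
  have hqmu : nc (mu%:C) * opnorm D < 1.
    rewrite (nc_rc _ (ltW mu0)).
    have : 2 * (X + eps + 1) > eps by lra.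
    move=> h; nra.
  have [kmu hkmu] := G_solve _ hqmu k.
  have Skmu : S kmu - mu%:C *: kmu = 0 by rewrite -GS hkmu.
  have Omu : Om (mu%:C).
    rewrite /Om /= normcE' (nc_rc _ (ltW mu0)) ltcR -div1r ltr_pdivlMr //; nra.
  have mune : mu%:C != 0 by apply/eqP => h; move: mu0; rewrite -ltc0R h ltxx.
  have hip0 := hne _ Omu mune _ Skmu.
  have e1 : ip (D z) k = - (mu%:C * ip (D z) (Rf kmu)).
    by rewrite -hkmu ipBr hip0 ipZr cj_rc sub0r.
  have nk : nv kmu <= nv k + mu * opnorm D * nv kmu.
    have kE : kmu = k + mu%:C *: Rf kmu by rewrite -hkmu subrK.
    rewrite {1}kE; apply: (le_trans (nvD _ _)); rewrite lerD2l nvZ (nc_rc _ (ltW mu0)) -mulrA.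
    rewrite ler_wpM2l ?(ltW mu0) //; exact: Rbnd.
  have nk2 : nv kmu <= 2 * nv k.
    have := nv_ge0 kmu; have := nv_ge0 k.
    have : mu * opnorm D * 2 <= 1.
      have t0 : 0 <= mu * opnorm D by rewrite mulr_ge0 // ltW.
      move: mur t0; move: (mu * opnorm D) => t mur' t0; nra.
    move: nk; move: (mu * opnorm D) => t nk' h1 h2 h3; nra.
  have h3 : nc (ip (D z) k) <= mu * (nv (D z) * (opnorm D * nv kmu)).
    rewrite e1 /nc normrN -/(nc _) ncM (nc_rc _ (ltW mu0)) ler_wpM2l ?(ltW mu0) //.
    apply: (le_trans (CSR _ _)); rewrite ler_wpM2l ?nv_ge0 //; exact: Rbnd.
  have := nv_ge0 (D z); have := nv_ge0 kmu; have := nv_ge0 k.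
  move: X0 mur h3 nk2; rewrite /X.
  move: (nc _) (nv (D z)) (nv k) (nv kmu) => A a b c X0 mur h3 nk2 b0 c0 a0.
  have t0 : 0 <= mu * opnorm D by rewrite mulr_ge0 // ltW.
  have e2 : mu * (a * (opnorm D * c)) = (mu * opnorm D) * (a * c) by ring.
  rewrite e2 in h3; move: h3 mur t0; move: (mu * opnorm D) => t h3 mur t0.
  have h4 : t * (a * c) <= t * (a * (2 * b)).
    by rewrite ler_wpM2l // ler_wpM2l.
  have h5 : t * (a * (2 * b)) <= t * (2 * (a * b + eps + 1)).
    rewrite ler_wpM2l //; nra.
  lra.
have c3 j : forall z, Pd z -> range (op_pow T j) z.
  elim: j => [|j ih] z hz; first by exists z.
  have [y _ hy] := ih _ (c2 _ hz).
  by exists y => //; rewrite /op_pow /= -/(op_pow T j y) hy -c1.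
have : (\bigcap_(j in [set j | (1 <= j)%N]) range (op_pow T j)) x.
  by move=> j _; exact: c3.
by rewrite han.
Qed.

End IP.


Theorem proposition3p11 (R : realType) (V : completeNormedModType R[i])
  (ip : V -> V -> R[i]) (hip : is_inner_product ip)
  (T Tstar Tdag : V -> V) (n : nat)
  (hT : bounded_op T) (hTstar : bounded_op Tstar) (hadj : is_adjoint ip T Tstar)
  (hdag : forall x, Tstar (T (Tdag x)) = Tstar x)
  (hli : left_invertible T) (han : analytic_op T)
  (hn : (0 < n)%N) (hind : fredholm_index T (- n%:Z)) :
  cowen_douglas n [set z : R[i] | `|z| < (real_complex R (opnorm Tdag)^-1)] Tstar.
Proof.
have [Rf hR] := @Rex R V ip hip T Tstar Tdag hT hTstar hadj hdag hli.
exact: (@cd_main R V ip hip T Tstar Tdag hT hTstar hadj hdag hli Rf hR n hn han hind).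
Qed.
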